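(* Let $\mathcal{G}_n$ be the set of binary words $w=w_1\cdots w_{2n}$ with $n$ zeros and $n$ ones. For $w\in\mathcal{G}_n$ let $o_{00}(w)=|\{i\in[n]: w_{2i-1}w_{2i}=00\}|$, $o_0(w)=|\{i\in[n]: w_{2i-1}=0\}|$, $\#_{001}(w)$ the number of occurrences of $001$ as a consecutive subword of $w$, and $\#_{01}(w)$ the number of occurrences of $01$ as a consecutive subword of $w$. Then there is a bijection $\phi:\mathcal{G}_n\to\mathcal{G}_n$ such that for all $w\in\mathcal{G}_n$, $$o_{00}(w)=\#_{001}(\phi(w))\quad\text{and}\quad o_0(w)=\#_{01}(\phi(w)).$$
   Context: $[n]=\{1,2,\dots,n\}$. *)

(* Defs.v *)
From mathcomp Require Import all_boot.
Set Implicit Arguments. Unset Strict Implicit. Unset Printing Implicit Defensive.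

(* Binary words: a letter is a bool, with false = 0 and true = 1.
   Positions are 0-based: w_{k} (1-based) is nth false w (k-1). *)

Definition inG (n : nat) (w : seq bool) : bool :=
  (size w == n.*2) && (count_mem false w == n) && (count_mem true w == n).

Definition Gn (n : nat) := {w : seq bool | inG n w}.

Definition letter (w : seq bool) (k : nat) : bool := nth false w k.

Definition o00 (n : nat) (w : seq bool) : nat :=
  #|[set i : 'I_n | (letter w i.*2 == false) && (letter w i.*2.+1 == false)]|.

Definition o0 (n : nat) (w : seq bool) : nat :=
  #|[set i : 'I_n | letter w i.*2 == false]|.

Definition occ (p w : seq bool) : nat :=
  count (fun k => take (size p) (drop k w) == p) (iota 0 (size w - size p).+1).

Definition occ001 (w : seq bool) : nat := occ [:: false; false; true] w.
Definition occ01 (w : seq bool) : nat := occ [:: false; true] w.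

(* Main.v *)
Require Import Defs.
From mathcomp Require Import all_boot zify.

Fixpoint Lx (u : seq bool) : seq bool :=
  match u with [::] => [::] | false :: u' => head false u' :: Lx u' | true :: u' => Lx u' end.
Fixpoint Ly (b : bool) (u : seq bool) : seq bool :=
  match u with [::] => [::] | true :: u' => b :: Ly false u' | false :: u' => Ly true u' end.

Lemma occ_iota p w N : 0 < size p -> size w - size p < N ->
  occ p w = count (fun k => take (size p) (drop k w) == p) (iota 0 N).
Proof.
move=> hp hN; rewrite /occ.
have -> : N = (size w - size p).+1 + (N - (size w - size p).+1) by lia.
rewrite iotaD count_cat.
rewrite [X in _ + X](@eq_in_count _ _ pred0) ?count_pred0 ?addn0 // => k0.
have [k ->] : exists k : nat, k0 = k by exists k0.
rewrite mem_iota => /andP [hk _] /=.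
apply/negbTE/eqP => h.
have := congr1 size h; rewrite size_take size_drop.
case: ifP => [h1 h2|h1 h2].
  move: h1 hk; rewrite add0n; set P := size p; set W := size w; lia.
move: h2 hk; rewrite add0n; set P := size p; set W := size w; lia.
Qed.

Lemma occ_cons p a u : 0 < size p ->
  occ p (a :: u) = (take (size p) (a :: u) == p) + occ p u.
Proof.
move=> hp; rewrite (@occ_iota _ (a :: u) (size u).+2) //; last first.
  rewrite /=; set P := size p; set U := size u; lia.
rewrite (@occ_iota _ u (size u).+1) //; last by set P := size p; set U := size u; lia.
have -> : iota 0 (size u).+2 = 0 :: iota (1 + 0) (size u).+1 by [].
by rewrite iotaDl /= count_map.
Qed.

Lemma occ01_cons a u : occ01 (a :: u) = (~~ a && head false u) + occ01 u.
Proof. by rewrite /occ01 occ_cons //; case: a; case: u => [|[] [|? ?]]. Qed.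

Lemma occ001_cons a u : occ001 (a :: u) =
  (take 3 (a :: u) == [:: false; false; true]) + occ001 u.
Proof. by rewrite /occ001 occ_cons. Qed.

Lemma size_Lx u : size (Lx u) = count negb u.
Proof. by elim: u => [|[] u IH] //=; rewrite IH. Qed.
Lemma size_Ly b u : size (Ly b u) = count id u.
Proof. by elim: u b => [|[] u IH] b //=; rewrite IH. Qed.
Lemma cnt_Lx u : count id (Lx u) = occ01 u.
Proof. by elim: u => [|[] u IH] //; rewrite occ01_cons /= IH. Qed.
Lemma cnt_Ly b u : count id (Ly b u) = (b && head false u) + occ01 u.
Proof.
elim: u b => [|[] u IH] b; first by rewrite andbF.
all: rewrite occ01_cons /= IH /=.
  by rewrite andbT.
by rewrite andbF.
Qed.
Lemma occ01_Lx u : occ01 (Lx u) = occ001 u.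
Proof.
elim: u => [|[] u IH] //.
  by rewrite occ001_cons /= IH.
rewrite occ001_cons /= occ01_cons IH; congr (_ + _).
case: u {IH} => [|[] u] //=; case: u => [|[] u] //=.
by rewrite take0.
Qed.

Lemma Ly_head u : head true (Ly true u) = true.
Proof. by elim: u => [|[] u IH]. Qed.

Lemma L_gen u1 : forall c b u2, Lx (c :: u1) = Lx (c :: u2) ->
  Ly b (c :: u1) = Ly b (c :: u2) -> u1 = u2.
Proof.
elim: u1 => [|d1 u1 IH] c b [|d2 u2] //=.
- case: c => /=; case: d2 => //= _ [] //.
- case: c => /=; case: d1 => //= _ [] //.
- case: c => /= H1 H2.
  + case: d1 H1 H2; case: d2 => //= H1 H2.
    * by congr (_ :: _); apply: (IH true false) => //=; case: H2 => ->.
    * by move: H2 => [] /(congr1 (head true)); rewrite Ly_head.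
    * by move: H2 => [] /(congr1 (head true)); rewrite Ly_head.
    * by congr (_ :: _); apply: (IH false false) => //=; case: H2 => ->.
  + case: H1 => ? H1; subst d2; by congr (_ :: _); apply: (IH d1 true).
Qed.

Lemma L_inj u1 u2 : Lx u1 = Lx u2 -> Ly false u1 = Ly false u2 -> u1 = u2.
Proof. by move=> H1 H2; apply: (@L_gen u1 true false u2) => //=; rewrite H2. Qed.


Fixpoint mrg (s a b : seq bool) : seq bool :=
  match s with
  | [::] => [::]
  | x :: s' => if x then head false a :: mrg s' (behead a) b
               else head false b :: mrg s' a (behead b)
  end.

Lemma size_mrg s a b : size (mrg s a b) = size s.
Proof. by elim: s a b => [|[] s IH] a b //=; rewrite IH. Qed.

Lemma mrg_props s : forall a b, size a = count id s -> size b = count negb s ->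
  [/\ mask s (mrg s a b) = a, mask (map negb s) (mrg s a b) = b &
      count id (mrg s a b) = count id a + count id b].
Proof.
elim: s => [|[] s IH] a b /=.
- by case: a => // ; case: b.
- case: a => [|x a] //= [ha] hb.
  have [e1 e2 e3] := IH a b ha hb.
  by rewrite e1 e2 e3 addnA.
- case: b => [|x b] //= ha [hb].
  have [e1 e2 e3] := IH a b ha hb.
  by rewrite e1 e2 e3 addnCA.
Qed.

Lemma count_zip_and s : forall t, size s = size t ->
  count (fun p : bool * bool => p.1 && p.2) (zip s t) = count id (mask s t).
Proof.
elim: s => [|x s IH] [|y t] //= [h]; rewrite IH //.
by case: x.
Qed.

Lemma count_zip1 (f : pred bool) s t : size s = size t ->
  count (fun p : bool * bool => f p.1) (zip s t) = count f s.
Proof.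
move=> h; have E := unzip1_zip (eq_leq h).
by rewrite -[in RHS]E /unzip1 count_map.
Qed.

Lemma count_zip2 (f : pred bool) s t : size s = size t ->
  count (fun p : bool * bool => f p.2) (zip s t) = count f t.
Proof.
move=> h; have E := unzip2_zip (eq_leq (esym h)).
by rewrite -[in RHS]E /unzip2 count_map.
Qed.

Definition pairw (p : bool * bool) : seq bool := [:: ~~ p.1; ~~ p.2].

Lemma size_fl z : size (flatten (map pairw z)) = (size z).*2.
Proof. by elim: z => [|p z IH] //=; rewrite IH doubleS. Qed.

Lemma count_fl z : count id (flatten (map pairw z)) =
  count (fun p : bool * bool => ~~ p.1) z + count (fun p : bool * bool => ~~ p.2) z.
Proof. elim: z => [|[a b] z IH] //=; rewrite IH; case: a; case: b => /=; lia. Qed.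

Lemma letter_fl1 z i : letter (flatten (map pairw z)) i.*2 = ~~ (nth (true, true) z i).1.
Proof. by elim: z i => [|p z IH] [|i] //=. Qed.

Lemma letter_fl2 z i : letter (flatten (map pairw z)) i.*2.+1 = ~~ (nth (true, true) z i).2.
Proof. elim: z i => [|p z IH] [|i] //.
by rewrite doubleS -IH.
Qed.

Lemma fl_inj z1 : forall z2, flatten (map pairw z1) = flatten (map pairw z2) -> z1 = z2.
Proof.
elim: z1 => [|[a b] z1 IH] [|[c d] z2] //= [].
by move=> /negb_inj -> /negb_inj -> /IH ->.
Qed.

Lemma card_count n (P : nat -> bool) : #|[set i : 'I_n | P i]| = count P (iota 0 n).
Proof.
rewrite -sum1_card -sum1_count.
rewrite (eq_bigl (fun i : 'I_n => P i)); last by move=> i; rewrite inE.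
by rewrite -(big_mkord (op := addn) (idx := 0) P (fun _ => 1)) /index_iota subn0.
Qed.

Lemma count_nth_iota (f : pred (bool * bool)) z :
  count (fun i => f (nth (true, true) z i)) (iota 0 (size z)) = count f z.
Proof. by rewrite -[in RHS](mkseq_nth (true, true) z) /mkseq count_map. Qed.


Definition tS u := mrg (Ly false u) (Ly false (Lx u)) (map negb (Lx (Lx u))).
Definition psiS u := flatten (map pairw (zip (Ly false u) (tS u))).

Lemma cm_true l : count_mem true l = count id l.
Proof. by apply: eq_count => -[]. Qed.
Lemma cm_false l : count_mem false l = count negb l.
Proof. by apply: eq_count => -[]. Qed.
Lemma cnt_split l : count id l + count negb l = size l.
Proof. exact: count_predC. Qed.

Lemma inG_facts n u : inG n u -> count negb u = n /\ count id u = n.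
Proof.
by case/andP => /andP [_ /eqP h1] /eqP h2; rewrite -cm_false -cm_true.
Qed.

Section Main.
Variables (n : nat) (u : seq bool).
Hypothesis (h0 : count negb u = n) (h1 : count id u = n).

Let x := Lx u.
Let s := Ly false u.
Let a := Ly false x.
Let b := map negb (Lx x).
Let t := tS u.

Lemma sz_s : size s = n. Proof. by rewrite /s size_Ly. Qed.
Lemma ct_s : count id s = occ01 u. Proof. by rewrite /s cnt_Ly. Qed.
Lemma sz_x : size x = n. Proof. by rewrite /x size_Lx. Qed.
Lemma ct_x : count id x = occ01 u. Proof. by rewrite /x cnt_Lx. Qed.
Lemma sz_a : size a = occ01 u. Proof. by rewrite /a size_Ly ct_x. Qed.
Lemma ct_a : count id a = occ01 x. Proof. by rewrite /a cnt_Ly. Qed.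
Lemma sz_b : size b = count negb x. Proof. by rewrite /b size_map size_Lx. Qed.
Lemma ct_b : count id b = count negb x - occ01 x.
Proof.
rewrite /b count_map.
have := cnt_split (Lx x); rewrite cnt_Lx size_Lx.
set N := count _ (Lx x); lia.
Qed.
Lemma cnx : count negb x = n - occ01 u.
Proof. have := cnt_split x; rewrite ct_x sz_x; lia. Qed.
Lemma cns : count negb s = n - occ01 u.
Proof. have := cnt_split s; rewrite ct_s sz_s; lia. Qed.
Lemma j_le : occ01 x <= count negb x.
Proof. rewrite -(cnt_Lx x) -size_Lx; exact: count_size. Qed.

Lemma mrg_ok : [/\ mask s t = a, mask (map negb s) t = b &
      count id t = count id a + count id b].
Proof.
apply: mrg_props; first by rewrite sz_a ct_s.
by rewrite sz_b cnx cns.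
Qed.

Lemma sz_t : size t = n. Proof. by rewrite /t /tS size_mrg -/s sz_s. Qed.

Lemma sz_z : size (zip s t) = n.
Proof. by rewrite size_zip sz_s sz_t minnn. Qed.

Lemma psiS_G : inG n (psiS u).
Proof.
rewrite /inG cm_true cm_false.
have hs := cnt_split (psiS u).
rewrite /psiS size_fl sz_z count_fl -/s -/t in hs *.
rewrite count_zip1 ?count_zip2 ?sz_s ?sz_t // in hs *.
have [_ _ e3] := mrg_ok.
have := cnt_split t; rewrite sz_t e3 ct_a ct_b => ht.
have := cnt_split s; rewrite sz_s ct_s => hs2.
have := j_le; have := cnx.
set k := occ01 u in ht hs2 *; set j := occ01 x in ht *.
set X := count negb x in ht *.
set A := count negb s in hs2 *. set B := count negb t in ht *.
set C := count negb (flatten _) in hs *.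
move=> e4 e5.
apply/andP; split; [apply/andP; split|]; apply/eqP; lia.
Qed.

Lemma psiS_stats : o00 n (psiS u) = occ001 u /\ o0 n (psiS u) = occ01 u.
Proof.
rewrite /o00 /o0.
rewrite (card_count n (fun k => (letter (psiS u) k.*2 == false) && (letter (psiS u) k.*2.+1 == false))).
rewrite (card_count n (fun k => (letter (psiS u) k.*2 == false))).
rewrite -sz_z /psiS -/s -/t.
split.
- rewrite (eq_count (a2 := fun i => (fun p : bool * bool => p.1 && p.2) (nth (true, true) (zip s t) i))); last first.
    by move=> i; rewrite letter_fl1 letter_fl2; case: (nth _ _ _) => [[] []].
  rewrite (count_nth_iota (fun p : bool * bool => p.1 && p.2)) count_zip_and ?sz_s ?sz_t //.
  have [-> _ _] := mrg_ok.
  by rewrite ct_a /x occ01_Lx.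
- rewrite (eq_count (a2 := fun i => (fun p : bool * bool => p.1) (nth (true, true) (zip s t) i))); last first.
    by move=> i; rewrite letter_fl1; case: (nth _ _ _) => [[] []].
  by rewrite (count_nth_iota (fun p : bool * bool => p.1)) (@count_zip1 id) ?sz_s ?sz_t // ct_s.
Qed.

End Main.

Lemma psiS_inj n u1 u2 : inG n u1 -> inG n u2 -> psiS u1 = psiS u2 -> u1 = u2.
Proof.
move=> /inG_facts [a0 a1] /inG_facts [b0 b1] /fl_inj hz.
have hs1 := @sz_s _ _ a1; have ht1 := @sz_t _ _ a1.
have hs2 := @sz_s _ _ b1; have ht2 := @sz_t _ _ b1.
have es : Ly false u1 = Ly false u2.
  have := congr1 unzip1 hz; rewrite !unzip1_zip //.
  - by rewrite hs2 ht2.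
  - by rewrite hs1 ht1.
have et : tS u1 = tS u2.
  have := congr1 unzip2 hz; rewrite !unzip2_zip //.
  - by rewrite hs2 ht2.
  - by rewrite hs1 ht1.
have [m1 m2 _] := @mrg_ok _ _ a0 a1.
have [m3 m4 _] := @mrg_ok _ _ b0 b1.
have ex : Lx u1 = Lx u2.
  apply: L_inj.
  - apply: (inj_map negb_inj); by rewrite -m2 -m4 es et.
  - by rewrite -m1 -m3 es et.
exact: L_inj.
Qed.


Lemma inG_size n w : inG n w -> size w == n.*2.
Proof. by case/andP => /andP []. Qed.

Definition TT n := {t : (n.*2).-tuple bool | inG n t}.

Definition toT n (w : Gn n) : TT n :=
  exist (fun t : (n.*2).-tuple bool => inG n t) (@Tuple (n.*2) bool (val w) (@inG_size _ _ (valP w))) (valP w).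
Definition fromT n (t : TT n) : Gn n := exist _ (val (val t)) (valP t).

Lemma fromTK n : cancel (@toT n) (@fromT n).
Proof. by move=> w; apply: val_inj. Qed.
Lemma toTK n : cancel (@fromT n) (@toT n).
Proof. by move=> t; apply: val_inj; apply: val_inj. Qed.

Definition psiG n (w : Gn n) : Gn n :=
  exist _ (psiS (val w)) (let: conj h0 h1 := @inG_facts _ _ (valP w) in @psiS_G _ _ h0 h1).

Lemma psiG_inj n : injective (@psiG n).
Proof.
move=> w1 w2 /(congr1 val) /= h; apply: val_inj.
exact: (@psiS_inj _ _ _ (valP w1) (valP w2) h).
Qed.

Theorem theorem3p4 (n : nat) :
  exists phi : Gn n -> Gn n,
    bijective phi /\
    forall w : Gn n,
      o00 n (val w) = occ001 (val (phi w)) /\ o0 n (val w) = occ01 (val (phi w)).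
Proof.
pose f := fun t : TT n => @toT n (@psiG n (@fromT n t)).
have finj : injective f.
  move=> t1 t2 /(congr1 (@fromT n)); rewrite !fromTK => /psiG_inj.
  by move/(congr1 (@toT n)); rewrite !toTK.
have [g fg gf] := injF_bij finj.
pose phi := fun w : Gn n => @fromT n (g (@toT n w)).
have K1 : cancel (@psiG n) phi.
  move=> w; rewrite /phi.
  have -> : @toT n (@psiG n w) = f (@toT n w) by rewrite /f fromTK.
  by rewrite fg fromTK.
have K2 : cancel phi (@psiG n).
  move=> w; rewrite /phi.
  have := gf (@toT n w); rewrite /f => /(congr1 (@fromT n)); rewrite !fromTK.
  by move=> ->.
exists phi; split; first by exists (@psiG n).
move=> w; rewrite -(K2 w) K1.
have [h0 h1] := @inG_facts _ _ (valP (phi w)).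
exact: (@psiS_stats _ _ h0 h1).
Qed.
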